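(* There exists a regular monoid $M$ such that all its Schützenberger groups (equivalently, all its maximal subgroups) are residually finite, and its right action on its $\mathcal{L}$-classes and its left action on its $\mathcal{R}$-classes are residually finite, but $M$ itself is not residually finite.
   Context: A monoid $M$ is regular if for every $x$ there is $y$ with $xyx=x$. Residual finiteness of a monoid: distinct elements are separated by homomorphisms to finite monoids. Green's relations: $x\mathcal{R}y$ iff $xM=yM$, $x\mathcal{L}y$ iff $Mx=My$, $\mathcal{H}=\mathcal{R}\cap\mathcal{L}$. $M$ acts on the right on $M/\mathcal{L}$ by $L_x\cdot m=L_{xm}$ and on the left on $M/\mathcal{R}$ by $m\cdot R_x=R_{mx}$; an action is residually finite if any two distinct points are separated by an action homomorphism onto an action on a finite set. For an $\mathcal{H}$-class $H$, $\mathrm{Stab}(H)=\{s\in M:Hs=H\}$, $\sigma=\{(x,y):hx=hy\ \forall h\in H\}$, and the Schützenberger group is $\Gamma(H)=\mathrm{Stab}(H)/\sigma$. *)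

(* Defs.v *)
From Stdlib Require Import List.

Record monoid := Monoid {
  carrier :> Type;
  mop : carrier -> carrier -> carrier;
  mone : carrier;
  massoc : forall x y z, mop x (mop y z) = mop (mop x y) z;
  mone_l : forall x, mop mone x = x;
  mone_r : forall x, mop x mone = x
}.

Arguments mop {m} _ _.
Arguments mone {m}.

Definition finite_type (X : Type) : Prop := exists l : list X, forall x, In x l.

Definition is_group (G : monoid) : Prop :=
  forall x : G, exists y : G, mop x y = mone /\ mop y x = mone.

Definition is_monoid_hom (M N : monoid) (f : M -> N) : Prop :=
  f mone = mone /\ forall x y : M, f (mop x y) = mop (f x) (f y).

Definition regular (M : monoid) : Prop :=
  forall x : M, exists y : M, mop (mop x y) x = x.

Definition residually_finite (M : monoid) : Prop :=
  forall x y : M, x <> y ->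
    exists (N : monoid), finite_type N /\
      exists f : M -> N, is_monoid_hom M N f /\ f x <> f y.

Definition greenR (M : monoid) (x y : M) : Prop :=
  (exists a : M, x = mop y a) /\ (exists b : M, y = mop x b).
Definition greenL (M : monoid) (x y : M) : Prop :=
  (exists a : M, x = mop a y) /\ (exists b : M, y = mop b x).
Definition greenH (M : monoid) (x y : M) : Prop := greenR M x y /\ greenL M x y.

Definition is_right_action (M : monoid) (X : Type) (act : X -> M -> X) : Prop :=
  (forall p, act p mone = p) /\ (forall p (a b : M), act (act p a) b = act p (mop a b)).
Definition is_left_action (M : monoid) (X : Type) (act : M -> X -> X) : Prop :=
  (forall p, act mone p = p) /\ (forall (a b : M) p, act a (act b p) = act (mop a b) p).

(* A map on M/L is
   represented as a map on M constant on L-classes. *)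
Definition L_action_residually_finite (M : monoid) : Prop :=
  forall x y : M, ~ greenL M x y ->
    exists (X : Type) (act : X -> M -> X),
      finite_type X /\ is_right_action M X act /\
      exists phi : M -> X,
        (forall u v : M, greenL M u v -> phi u = phi v) /\
        (forall (u m : M), phi (mop u m) = act (phi u) m) /\
        phi x <> phi y.

Definition R_action_residually_finite (M : monoid) : Prop :=
  forall x y : M, ~ greenR M x y ->
    exists (X : Type) (act : M -> X -> X),
      finite_type X /\ is_left_action M X act /\
      exists phi : M -> X,
        (forall u v : M, greenR M u v -> phi u = phi v) /\
        (forall (m u : M), phi (mop m u) = act m (phi u)) /\
        phi x <> phi y.

Definition in_stab (M : monoid) (h0 s : M) : Prop :=
  (forall h : M, greenH M h0 h -> greenH M h0 (mop h s)) /\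
  (forall h' : M, greenH M h0 h' -> exists h : M, greenH M h0 h /\ h' = mop h s).

Definition schutz_sigma (M : monoid) (h0 x y : M) : Prop :=
  forall h : M, greenH M h0 h -> mop h x = mop h y.

(* A homomorphism Gamma(H) -> G is represented as a map on Stab(H)
   (extended arbitrarily to M) that is constant on sigma-classes and
   multiplicative with f 1 = 1. *)
Definition schutzenberger_group_residually_finite (M : monoid) (h0 : M) : Prop :=
  forall s t : M, in_stab M h0 s -> in_stab M h0 t -> ~ schutz_sigma M h0 s t ->
    exists (G : monoid), is_group G /\ finite_type G /\
      exists f : M -> G,
        (forall u v : M, in_stab M h0 u -> in_stab M h0 v ->
            schutz_sigma M h0 u v -> f u = f v) /\
        (forall u v : M, in_stab M h0 u -> in_stab M h0 v ->
            f (mop u v) = mop (f u) (f v)) /\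
        f mone = mone /\
        f s <> f t.

(* Main.v *)
Require Import Defs.
From Stdlib Require Import List Arith Lia Bool Classical FinFun.
Import ListNotations.

(* Completely simple Rees matrix semigroup over Z/2 with index sets nat,
   sandwich p l i = (l =? i), with an identity adjoined. *)
Inductive T := One | El (i : nat) (g : bool) (l : nat).

Definition p (l i : nat) : bool := Nat.eqb l i.

Definition Mop (x y : T) : T :=
  match x, y with
  | One, _ => y
  | _, One => x
  | El i g l, El j h m => El i (xorb g (xorb (p l j) h)) m
  end.

Lemma Mop_assoc : forall x y z, Mop x (Mop y z) = Mop (Mop x y) z.
Proof.
  intros [|i g l] [|j h m] [|k c n]; simpl; try reflexivity.
  f_equal. destruct g, h, c, (p l j), (p m k); reflexivity.
Qed.
Lemma Mop_one_l : forall x, Mop One x = x. Proof. reflexivity. Qed.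
Lemma Mop_one_r : forall x, Mop x One = x. Proof. intros [|]; reflexivity. Qed.

Definition MM : monoid := Monoid T Mop One Mop_assoc Mop_one_l Mop_one_r.

Lemma xb_assoc_one : forall a b c, xorb a (xorb b c) = xorb (xorb a b) c.
Proof. intros [] [] []; reflexivity. Qed.

Definition Bop (a b : bool) := xorb a b.
Lemma Bop_assoc : forall x y z, Bop x (Bop y z) = Bop (Bop x y) z.
Proof. intros [] [] []; reflexivity. Qed.
Lemma Bop_l : forall x, Bop false x = x. Proof. intros []; reflexivity. Qed.
Lemma Bop_r : forall x, Bop x false = x. Proof. intros []; reflexivity. Qed.
Definition BG : monoid := Monoid bool Bop false Bop_assoc Bop_l Bop_r.

Lemma BG_group : is_group BG.
Proof. intros x. exists x. destruct x; simpl; split; reflexivity. Qed.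
Lemma BG_fin : finite_type BG.
Proof. exists [true; false]. intros []; simpl; auto. Qed.

Lemma pigeon : forall (N : Type) (l : list N), (forall x, In x l) ->
  forall F : nat -> N, exists a b, a <> b /\ F a = F b.
Proof.
  intros N l Hl F. apply NNPP. intro H.
  assert (Hi : Injective F).
  { intros a b E. destruct (classic (a = b)); auto. exfalso; apply H; eauto. }
  pose proof (Injective_map_NoDup Hi (seq_NoDup (S (length l)) 0)) as ND.
  assert (incl (map F (seq 0 (S (length l)))) l) by (intros z _; apply Hl).
  pose proof (NoDup_incl_length ND H0).
  rewrite length_map, length_seq in H1. lia.
Qed.

Lemma greenH_refl : forall x : MM, greenH MM x x.
Proof.
  intro x. split; split; exists One; simpl;
    [rewrite Mop_one_r| rewrite Mop_one_r|reflexivity|reflexivity]; reflexivity.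
Qed.

Definition fS (s : T) : bool :=
  match s with One => false | El j h m => xorb (p m j) h end.

Lemma stab_col : forall i g l s, in_stab MM (El i g l) s ->
  s = One \/ exists j h, s = El j h l.
Proof.
  intros i g l s [H1 _]. specialize (H1 _ (greenH_refl _)).
  destruct H1 as [_ [_ [b Hb]]]. destruct s as [|j h m]; auto.
  right. destruct b as [|k c n]; simpl in Hb; inversion Hb; subst; eauto.
Qed.

Lemma mul_stab : forall i g l s, (s = One \/ exists j h, s = El j h l) ->
  Mop (El i g l) s = El i (xorb g (fS s)) l.
Proof.
  intros i g l s [->|[j [h ->]]]; simpl; [rewrite xorb_false_r|]; reflexivity.
Qed.

Lemma H_form : forall i g l h, greenH MM (El i g l) h -> exists g', h = El i g' l.
Proof.
  intros i g l h [[_ [b Hb]] [_ [c Hc]]]. simpl in *.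
  destruct h as [|j k m]; [destruct b; discriminate|].
  destruct b as [|? ? ?]; simpl in Hb; inversion Hb; subst;
  destruct c as [|? ? ?]; simpl in Hc; inversion Hc; subst; eauto.
Qed.

Lemma one_stab : forall s, in_stab MM One s -> s = One.
Proof.
  intros s [H1 _]. specialize (H1 _ (greenH_refl _)).
  destruct H1 as [[[a Ha] _] _]. simpl in Ha.
  destruct s; [reflexivity|]. destruct a; discriminate.
Qed.

Lemma prod_one : forall a b, Mop a b = One -> a = One /\ b = One.
Proof. intros [|] [|]; simpl; intro H; try discriminate; auto. Qed.

Theorem mainTheorem7 :
  exists M : monoid,
    regular M /\
    (forall h0 : M, schutzenberger_group_residually_finite M h0) /\
    L_action_residually_finite M /\
    R_action_residually_finite M /\
    ~ residually_finite M.
Proof.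
  exists MM. split; [|split; [|split; [|split]]].
  -
    intros [|i g l].
    + exists One. reflexivity.
    + exists (El l (xorb g (xorb (p l l) (p i i))) i). simpl. f_equal.
      unfold p; rewrite !Nat.eqb_refl; destruct g; reflexivity.
  - intros h0 s t Hs Ht Hst. destruct h0 as [|i g l].
    + apply one_stab in Hs; apply one_stab in Ht; subst.
      exfalso; apply Hst; intros h _; reflexivity.
    + exists BG. split; [exact BG_group|]. split; [exact BG_fin|].
      exists fS. split; [|split; [|split]].
      * intros u v Hu Hv Huv. specialize (Huv _ (greenH_refl _)).
        change (Mop (El i g l) u = Mop (El i g l) v) in Huv.
        rewrite (mul_stab _ _ _ _ (stab_col _ _ _ _ Hu)),
                (mul_stab _ _ _ _ (stab_col _ _ _ _ Hv)) in Huv.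
        inversion Huv. destruct g, (fS u), (fS v); simpl in *; congruence.
      * intros u v Hu Hv.
        destruct (stab_col _ _ _ _ Hu) as [->|[j [h ->]]]; [reflexivity|].
        destruct (stab_col _ _ _ _ Hv) as [->|[k [c ->]]];
          simpl; [destruct (p l j), h; reflexivity|].
        destruct (p l j), h, (p l k), c; reflexivity.
      * reflexivity.
      * intro E. apply Hst. intros h Hh.
        destruct (H_form _ _ _ _ Hh) as [g' ->]. change (Mop (El i g' l) s = Mop (El i g' l) t).
        rewrite (mul_stab _ _ _ _ (stab_col _ _ _ _ Hs)),
                (mul_stab _ _ _ _ (stab_col _ _ _ _ Ht)), E. reflexivity.
  - intros x y Hxy.
    set (lam := match x with El _ _ l => l | One => 0 end).
    exists (option bool).
    exists (fun o (m : MM) => match m with One => o | El _ _ m' => Some (Nat.eqb m' lam) end).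
    split; [exists [None; Some true; Some false]; intros [[]|]; simpl; auto|].
    split.
    { split; [intros; reflexivity|]. intros o [|] [|]; reflexivity. }
    exists (fun u : MM => match u with One => None | El _ _ m => Some (Nat.eqb m lam) end).
    split; [|split].
    + intros u v [[a Ha] [b Hb]]. simpl in *.
      destruct u as [|? ? ?].
      * symmetry in Ha. apply prod_one in Ha as [_ ->]. reflexivity.
      * destruct v as [|? ? ?]; [symmetry in Hb; apply prod_one in Hb as [_ Hb]; discriminate|].
        destruct a; simpl in Ha; inversion Ha; subst; reflexivity.
    + intros [|] [|]; reflexivity.
    + destruct x as [|i g l], y as [|j h m]; try discriminate.
      * intros _. apply Hxy. apply greenH_refl.
      * subst lam. intro E. inversion E. rewrite Nat.eqb_refl in H0.
        symmetry in H0. apply Nat.eqb_eq in H0. subst. apply Hxy.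
        split.
        -- exists (El i (xorb g (xorb (p l j) h)) l). simpl. f_equal.
           destruct g, (p l j), h; reflexivity.
        -- exists (El j (xorb h (xorb (p l i) g)) l). simpl. f_equal.
           destruct g, (p l i), h; reflexivity.
  - intros x y Hxy.
    set (lam := match x with El r _ _ => r | One => 0 end).
    exists (option bool).
    exists (fun (m : MM) o => match m with One => o | El r _ _ => Some (Nat.eqb r lam) end).
    split; [exists [None; Some true; Some false]; intros [[]|]; simpl; auto|].
    split.
    { split; [intros; reflexivity|]. intros [|] [|] o; reflexivity. }
    exists (fun u : MM => match u with One => None | El r _ _ => Some (Nat.eqb r lam) end).
    split; [|split].
    + intros u v [[a Ha] [b Hb]]. simpl in *.
      destruct u as [|? ? ?].
      * symmetry in Ha. apply prod_one in Ha as [-> _]. reflexivity.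
      * destruct v as [|? ? ?]; [symmetry in Hb; apply prod_one in Hb as [Hb _]; discriminate|].
        destruct a; simpl in Ha; inversion Ha; subst; reflexivity.
    + intros [|] [|]; reflexivity.
    + destruct x as [|i g l], y as [|j h m]; try discriminate.
      * intros _. apply Hxy. apply greenH_refl.
      * subst lam. intro E. inversion E. rewrite Nat.eqb_refl in H0.
        symmetry in H0. apply Nat.eqb_eq in H0. subst. apply Hxy.
        split.
        -- exists (El 0 (xorb g (xorb h (p m 0))) l). simpl. f_equal.
           destruct g, h, (p m 0); reflexivity.
        -- exists (El 0 (xorb h (xorb g (p l 0))) m). simpl. f_equal.
           destruct g, h, (p l 0); reflexivity.
  - intro HRF.
    destruct (HRF (El 0 true 0) (El 0 false 0)) as [N [[l Hl] [f [[_ Hf] Hne]]]];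
      [discriminate|].
    destruct (pigeon N l Hl (fun k => f (El 0 false k))) as [a [b [Hab E]]].
    apply Hne.
    assert (E1 : El 0 true 0 = Mop (El 0 false a) (El a false 0)).
    { simpl. unfold p. rewrite Nat.eqb_refl. reflexivity. }
    assert (E2 : El 0 false 0 = Mop (El 0 false b) (El a false 0)).
    { simpl. unfold p. apply Nat.eqb_neq in Hab. rewrite Nat.eqb_sym, Hab. reflexivity. }
    change (f (El 0 true 0) = f (El 0 false 0)).
    rewrite E1, E2. change (Mop ?u ?v) with (@mop MM u v).
    rewrite !Hf. simpl in E. rewrite E. reflexivity.
Qed.
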